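(* Fix real numbers $\rho,\sigma$ with $\rho,\sigma\neq 0$ and $\rho\neq\pm\sigma$. For $(x,y)\in\mathbb{R}^2$ let $\ell_a$ and $\ell_c$ be the lines through $(0,0)$ with slopes $\rho$ and $-\rho$, and let $\ell_b$ and $\ell_d$ be the lines through $(x,y)$ with slopes $\sigma$ and $-\sigma$. Let $P_1=\ell_d\cap\ell_a$, $P_2=\ell_a\cap\ell_b$, $P_3=\ell_b\cap\ell_c$, $P_4=\ell_c\cap\ell_d$ be the vertices of the (possibly nonconvex or degenerate) quadrilateral $P_1P_2P_3P_4$. Fix unit vectors $u_a,u_b,u_c,u_d$ parallel to $\ell_a,\ell_b,\ell_c,\ell_d$ respectively, and define the signed lengths $a=(P_2-P_1)\cdot u_a$, $b=(P_3-P_2)\cdot u_b$, $c=(P_4-P_3)\cdot u_c$, $d=(P_1-P_4)\cdot u_d$, and the signed area $A=\frac12\sum_{i=1}^{4}\det(P_i,P_{i+1})$ (indices mod $4$), where the unit vectors are chosen and the overall sign of the area is adjusted (by multiplying $A$ by a fixed $\pm1$) so that $a,b,c,d,A>0$ at some parameter $(x,y)$ for which $P_1P_2P_3P_4$ is convex (assume such a parameter exists). Set $B^2=(s-a)(s-b)(s-c)(s-d)$ with $s=\frac{a+b+c+d}{2}$. Then, as functions of $(x,y)$, there are constants $\lambda,\mu$ (depending on $\rho,\sigma$ and the sign choices) such that $$A(x,y)=\lambda\,xy,\qquad B^2(x,y)=\mu\,(xy)^2 .$$ Consequently $A^2/B^2$ is constant on the set of $(x,y)$ for which $P_1P_2P_3P_4$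 is a convex quadrilateral.
   Context: $\det(P,Q)$ denotes the $2\times2$ determinant of the column vectors $P,Q\in\mathbb{R}^2$. The signed area of a closed polygon is the sum of areas of the regions it bounds, weighted by winding number; for a quadrilateral it equals $\frac12\sum_i\det(P_i,P_{i+1})$ up to orientation sign. *)

(* Defs.v *)
From Stdlib Require Import Reals.
Open Scope R_scope.

Definition pt := (R * R)%type.
Definition det (p q : pt) : R := fst p * snd q - snd p * fst q.
Definition dot (p q : pt) : R := fst p * fst q + snd p * snd q.
Definition psub (p q : pt) : pt := (fst p - fst q, snd p - snd q).

Definition on_line (p : pt) (m : R) (q : pt) : Prop :=
  snd q - snd p = m * (fst q - fst p).

Definition unit_dir (m : R) (u : pt) : Prop :=
  fst u ^ 2 + snd u ^ 2 = 1 /\ snd u = m * fst u.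

Definition quad_area (P1 P2 P3 P4 : pt) : R :=
  / 2 * (det P1 P2 + det P2 P3 + det P3 P4 + det P4 P1).

Definition turn (p q r : pt) : R := det (psub q p) (psub r q).

Definition convex_quad (P1 P2 P3 P4 : pt) : Prop :=
  (0 < turn P4 P1 P2 /\ 0 < turn P1 P2 P3 /\ 0 < turn P2 P3 P4 /\ 0 < turn P3 P4 P1)
  \/
  (turn P4 P1 P2 < 0 /\ turn P1 P2 P3 < 0 /\ turn P2 P3 P4 < 0 /\ turn P3 P4 P1 < 0).

Definition Bsq (a b c d : R) : R :=
  let s := (a + b + c + d) / 2 in (s - a) * (s - b) * (s - c) * (s - d).

(* Main.v *)
Require Import Defs.
From Stdlib Require Import Reals Lra Psatz.
Open Scope R_scope.

Definition Pt (m X : R) : pt := (X, m * X).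

Lemma pt_eq (m s x y : R) (P : pt) :
  m + s <> 0 ->
  on_line (0,0) m P -> on_line (x, y) (- s) P ->
  P = Pt m ((y + s * x) / (m + s)).
Proof.
  intros Hms Ha Hb. destruct P as [p q].
  unfold on_line in *; simpl in *.
  assert (Hp : (m + s) * p = y + s * x) by nra.
  assert (Hp' : p = (y + s * x) / (m + s)).
  { apply (Rmult_eq_reg_l (m + s)); auto. rewrite Hp. field. auto. }
  unfold Pt. rewrite <- Hp'. f_equal. lra.
Qed.

Lemma pow2_gt_0 x : x <> 0 -> 0 < x^2.
Proof. intro h; replace (x^2) with (Rsqr x) by (unfold Rsqr; ring); apply Rsqr_pos_lt; auto. Qed.

Section S.
Variables rho sigma x y ua1 ub1 uc1 ud1 : R.
Hypothesis Hr : rho <> 0.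
Hypothesis Hs : sigma <> 0.
Hypothesis Hrs : rho - sigma <> 0.
Hypothesis Hrs' : rho + sigma <> 0.
Lemma HD : rho * rho - sigma * sigma <> 0.
Proof. replace (rho*rho - sigma*sigma) with ((rho-sigma)*(rho+sigma)) by ring.
 apply Rmult_integral_contrapositive; auto. Qed.
Ltac sc := repeat split; auto; try apply HD; intro h;
  first [apply Hrs'; lra | apply Hrs; lra].
Let Q1 := Pt rho ((y + sigma * x) / (rho + sigma)).
Let Q2 := Pt rho ((y + - sigma * x) / (rho + - sigma)).
Let Q3 := Pt (-rho) ((y + - sigma * x) / (- rho + - sigma)).
Let Q4 := Pt (-rho) ((y + sigma * x) / (- rho + sigma)).
Let QQ := (y^2 - rho^2 * x^2) * (y^2 - sigma^2 * x^2).

Lemma area_id : quad_area Q1 Q2 Q3 Q4 = (-4 * rho * sigma / (rho^2 - sigma^2)) * (x * y).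
Proof. unfold quad_area, Q1, Q2, Q3, Q4, Pt, det; simpl. field.
 sc. Qed.

Lemma turn_id : turn Q4 Q1 Q2 * turn Q2 Q3 Q4 =
  - (16 * (rho + sigma)^2 * sigma^2 * rho^2 / (rho^2 - sigma^2)^4) * QQ.
Proof. unfold turn, QQ, Q1, Q2, Q3, Q4, Pt, det, psub; simpl. field.
 sc. Qed.
Let a := dot (psub Q2 Q1) (ua1, rho*ua1).
Let b := dot (psub Q3 Q2) (ub1, sigma*ub1).
Let c := dot (psub Q4 Q3) (uc1, -rho*uc1).
Let d := dot (psub Q1 Q4) (ud1, -sigma*ud1).
Lemma abcd_id : a*b*c*d = ua1*ub1*uc1*ud1*((1+rho^2)^2*(1+sigma^2)^2*16*sigma^2*rho^2/(rho^2-sigma^2)^4) * QQ.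
Proof. unfold a,b,c,d, QQ, Q1, Q2, Q3, Q4, Pt, dot, psub; simpl. field. sc. Qed.
Let mu := let al := ua1*(1+rho^2)*2*sigma/(rho^2-sigma^2) in
          let be := ub1*(1+sigma^2)*2*rho/(rho^2-sigma^2) in
          (be^2-al^2)*(al^2*rho^2-be^2*sigma^2).
Lemma B_id1 : uc1 = ua1 -> ud1 = - ub1 -> Bsq a b c d = mu * (x*y)^2.
Proof. intros -> ->. unfold Bsq, mu, a,b,c,d, QQ, Q1, Q2, Q3, Q4, Pt, dot, psub; simpl. field. sc. Qed.
Lemma B_id2 : uc1 = - ua1 -> ud1 = ub1 -> Bsq a b c d = mu * (x*y)^2.
Proof. intros -> ->. unfold Bsq, mu, a,b,c,d, QQ, Q1, Q2, Q3, Q4, Pt, dot, psub; simpl. field. sc. Qed.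
Lemma conv_Q : convex_quad Q1 Q2 Q3 Q4 -> QQ < 0.
Proof.
  intro Hc. assert (HT : 0 < turn Q4 Q1 Q2 * turn Q2 Q3 Q4).
  { destruct Hc as [[h1 [h2 [h3 h4]]]|[h1 [h2 [h3 h4]]]].
    - apply Rmult_lt_0_compat; auto.
    - nra. }
  rewrite turn_id in HT.
  assert (HK : 0 < 16 * (rho + sigma)^2 * sigma^2 * rho^2 / (rho^2 - sigma^2)^4).
  { unfold Rdiv. apply Rmult_lt_0_compat.
    - assert (0 < (rho+sigma)^2) by (apply pow2_gt_0; auto).
      assert (0 < sigma^2) by (apply pow2_gt_0; auto).
      assert (0 < rho^2) by (apply pow2_gt_0; auto). apply Rmult_lt_0_compat; [apply Rmult_lt_0_compat; [apply Rmult_lt_0_compat; [lra|exact H]|exact H0]|exact H1].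
    - apply Rinv_0_lt_compat. replace ((rho^2 - sigma^2)^4) with (((rho^2-sigma^2)^2)^2) by ring.
      apply pow2_gt_0. apply pow_nonzero. replace (rho^2-sigma^2) with (rho*rho-sigma*sigma) by ring. apply HD. }
  nra.
Qed.
End S.

Theorem mainTheorem3 (rho sigma : R) (P1 P2 P3 P4 : R -> R -> pt)
  (ua ub uc ud : pt) (eps : R) :
  rho <> 0 -> sigma <> 0 -> rho <> sigma -> rho <> - sigma ->
  (* P1 = l_d ∩ l_a, P2 = l_a ∩ l_b, P3 = l_b ∩ l_c, P4 = l_c ∩ l_d *)
  (forall x y, on_line (0, 0) rho (P1 x y) /\ on_line (x, y) (- sigma) (P1 x y)) ->
  (forall x y, on_line (0, 0) rho (P2 x y) /\ on_line (x, y) sigma (P2 x y)) ->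
  (forall x y, on_line (0, 0) (- rho) (P3 x y) /\ on_line (x, y) sigma (P3 x y)) ->
  (forall x y, on_line (0, 0) (- rho) (P4 x y) /\ on_line (x, y) (- sigma) (P4 x y)) ->
  unit_dir rho ua -> unit_dir sigma ub -> unit_dir (- rho) uc -> unit_dir (- sigma) ud ->
  (eps = 1 \/ eps = -1) ->
  let a := fun x y => dot (psub (P2 x y) (P1 x y)) ua in
  let b := fun x y => dot (psub (P3 x y) (P2 x y)) ub in
  let c := fun x y => dot (psub (P4 x y) (P3 x y)) uc in
  let d := fun x y => dot (psub (P1 x y) (P4 x y)) ud in
  let A := fun x y => eps * quad_area (P1 x y) (P2 x y) (P3 x y) (P4 x y) in
  let B2 := fun x y => Bsq (a x y) (b x y) (c x y) (d x y) in
  (exists x0 y0, convex_quad (P1 x0 y0) (P2 x0 y0) (P3 x0 y0) (P4 x0 y0) /\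
     0 < a x0 y0 /\ 0 < b x0 y0 /\ 0 < c x0 y0 /\ 0 < d x0 y0 /\ 0 < A x0 y0) ->
  (exists lam mu : R, forall x y, A x y = lam * (x * y) /\ B2 x y = mu * (x * y) ^ 2) /\
  (exists k : R, forall x y, convex_quad (P1 x y) (P2 x y) (P3 x y) (P4 x y) ->
     (A x y) ^ 2 / B2 x y = k).
Proof.
  intros Hr Hs Hrs Hrs' H1 H2 H3 H4 Ua Ub Uc Ud Heps a b c d A B2 Hex.
  assert (Hm : rho - sigma <> 0) by (intro h; apply Hrs; lra).
  assert (Hp : rho + sigma <> 0) by (intro h; apply Hrs'; lra).
  assert (E1 : forall x y, P1 x y = Pt rho ((y + sigma * x) / (rho + sigma))).
  { intros x y; destruct (H1 x y); apply pt_eq; auto. }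
  assert (E2 : forall x y, P2 x y = Pt rho ((y + - sigma * x) / (rho + - sigma))).
  { intros x y; destruct (H2 x y); apply pt_eq; auto; rewrite Ropp_involutive; auto. }
  assert (E3 : forall x y, P3 x y = Pt (-rho) ((y + - sigma * x) / (- rho + - sigma))).
  { intros x y; destruct (H3 x y); apply pt_eq; auto.
    intro h; apply Hp; lra. rewrite Ropp_involutive; auto. }
  assert (E4 : forall x y, P4 x y = Pt (-rho) ((y + sigma * x) / (- rho + sigma))).
  { intros x y; destruct (H4 x y); apply pt_eq; auto. intro h; apply Hm; lra. }
  destruct ua as [ua1 ua2], Ua as [Ua Ua']; simpl in Ua, Ua'; subst ua2.
  destruct ub as [ub1 ub2], Ub as [Ub Ub']; simpl in Ub, Ub'; subst ub2.
  destruct uc as [uc1 uc2], Uc as [Uc Uc']; simpl in Uc, Uc'; subst uc2.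
  destruct ud as [ud1 ud2], Ud as [Ud Ud']; simpl in Ud, Ud'; subst ud2.
  assert (Sac : uc1 = ua1 \/ uc1 = - ua1).
  { assert (h : (1 + rho^2) * ((uc1 - ua1) * (uc1 + ua1)) = 0) by nra.
    apply Rmult_integral in h. destruct h as [h|h].
    - assert (0 < 1 + rho^2) by (pose proof (pow2_ge_0 rho); lra). lra.
    - apply Rmult_integral in h; destruct h; [left|right]; lra. }
  assert (Sbd : ud1 = ub1 \/ ud1 = - ub1).
  { assert (h : (1 + sigma^2) * ((ud1 - ub1) * (ud1 + ub1)) = 0) by nra.
    apply Rmult_integral in h. destruct h as [h|h].
    - assert (0 < 1 + sigma^2) by (pose proof (pow2_ge_0 sigma); lra). lra.
    - apply Rmult_integral in h; destruct h; [left|right]; lra. }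
  assert (Good : (uc1 = ua1 /\ ud1 = - ub1) \/ (uc1 = - ua1 /\ ud1 = ub1)).
  { destruct Hex as [x0 [y0 [Hc [ha [hb [hc [hd _]]]]]]].
    unfold a, b, c, d in ha, hb, hc, hd.
    rewrite ?E1, ?E2, ?E3, ?E4 in Hc; rewrite ?E1, ?E2, ?E3, ?E4 in ha; rewrite ?E1, ?E2, ?E3, ?E4 in hb; rewrite ?E1, ?E2, ?E3, ?E4 in hc; rewrite ?E1, ?E2, ?E3, ?E4 in hd.
    pose proof (conv_Q rho sigma x0 y0 Hr Hs Hm Hp Hc) as HQ.
    pose proof (abcd_id rho sigma x0 y0 ua1 ub1 uc1 ud1 Hr Hs Hm Hp) as Habcd.
    set (K := (1+rho^2)^2*(1+sigma^2)^2*16*sigma^2*rho^2/(rho^2-sigma^2)^4) in Habcd.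
    assert (HK : 0 <= K).
    { unfold K. unfold Rdiv. apply Rmult_le_pos.
      - assert (0 <= (1+rho^2)^2) by apply pow2_ge_0.
        assert (0 <= (1+sigma^2)^2) by apply pow2_ge_0.
        assert (0 <= sigma^2) by apply pow2_ge_0.
        assert (0 <= rho^2) by apply pow2_ge_0.
        apply Rmult_le_pos; [|auto]. apply Rmult_le_pos; [|auto].
        apply Rmult_le_pos; [|lra]. apply Rmult_le_pos; auto.
      - apply Rlt_le, Rinv_0_lt_compat.
        replace ((rho^2 - sigma^2)^4) with (((rho^2-sigma^2)^2)^2) by ring.
        apply pow2_gt_0. apply pow_nonzero.
        replace (rho^2-sigma^2) with (rho*rho-sigma*sigma) by ring. apply HD; auto. }
    set (QQ := (y0 ^ 2 - rho ^ 2 * x0 ^ 2) * (y0 ^ 2 - sigma ^ 2 * x0 ^ 2)) in HQ, Habcd.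
    set (a0 := dot _ (ua1, rho * ua1)) in ha, Habcd.
    set (b0 := dot _ (ub1, sigma * ub1)) in hb, Habcd.
    set (c0 := dot _ (uc1, - rho * uc1)) in hc, Habcd.
    set (d0 := dot _ (ud1, - sigma * ud1)) in hd, Habcd.
    assert (Hpos : 0 < a0 * b0 * c0 * d0).
    { repeat apply Rmult_lt_0_compat; auto. }
    assert (Hu : 0 <= ua1 * ub1 * uc1 * ud1 -> False).
    { intro hu. assert (0 <= ua1 * ub1 * uc1 * ud1 * K) by (apply Rmult_le_pos; auto).
      nra. }
    destruct Sac as [e1|e1]; destruct Sbd as [e2|e2]; rewrite e1, e2 in Hu.
    - exfalso; apply Hu. replace (ua1 * ub1 * ua1 * ub1) with ((ua1*ub1)^2) by ring.
      apply pow2_ge_0.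
    - left; auto.
    - right; auto.
    - exfalso; apply Hu. replace (ua1 * ub1 * - ua1 * - ub1) with ((ua1*ub1)^2) by ring.
      apply pow2_ge_0. }
  set (lam := eps * (-4 * rho * sigma / (rho^2 - sigma^2))).
  set (mu := let al := ua1*(1+rho^2)*2*sigma/(rho^2-sigma^2) in
          let be := ub1*(1+sigma^2)*2*rho/(rho^2-sigma^2) in
          (be^2-al^2)*(al^2*rho^2-be^2*sigma^2)).
  assert (Main : forall x y, A x y = lam * (x * y) /\ B2 x y = mu * (x * y) ^ 2).
  { intros x y. unfold A, B2, a, b, c, d. rewrite E1, E2, E3, E4. split.
    - rewrite area_id; auto. unfold lam. ring.
    - destruct Good as [[g1 g2]|[g1 g2]].
      + apply B_id1; auto.
      + apply B_id2; auto. }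
  split.
  - exists lam, mu. exact Main.
  - exists (lam ^ 2 / mu). intros x y Hc.
    destruct (Main x y) as [-> ->].
    rewrite E1, E2, E3, E4 in Hc.
    pose proof (conv_Q rho sigma x y Hr Hs Hm Hp Hc) as HQ.
    assert (Hxy : x * y <> 0).
    { intro h. apply Rmult_integral in h. destruct h as [h|h]; subst; nra. }
    destruct (Req_dec mu 0) as [h|h].
    + rewrite h. unfold Rdiv. rewrite !Rmult_0_l, Rinv_0. ring.
    + assert (x <> 0) by (intro; apply Hxy; subst; ring). assert (y <> 0) by (intro; apply Hxy; subst; ring). field. auto.
Qed.
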